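(* Let $n\ge1$, let $\|\cdot\|$ be a norm on $\mathbb R^n$, and let $H=(h_1,\dots,h_n)$ be a continuous map from an open set of $\mathbb R^{4n+1}$ to $\mathbb R^n$, written $H(t;\zeta^0,\zeta^1;\xi^0,\xi^1)$ with $t\in\mathbb R$, $\zeta^0,\zeta^1,\xi^0,\xi^1\in\mathbb R^n$. Assume $P=(p_1,\dots,p_n)$ satisfies $P=H(0;\mathbf 0,\mathbf 0;P,P)$ and $|p_1|\le1$. Let $\mathcal P=(0;\mathbf0,\mathbf0;P,P)$ and, for $\varepsilon>0$, $$N_\varepsilon(\mathcal P)=\{(t;\zeta^0,\zeta^1;\xi^0,\xi^1):|t|+\|\zeta^0\|+\|\zeta^1\|+\|\xi^0-P\|+\|\xi^1-P\|\le\varepsilon\},$$ and suppose $N_\varepsilon(\mathcal P)$ lies in the domain of $H$ and: (i) there is $\Lambda>0$ with $\|H(\bar t;\zeta^0,\zeta^1;\xi^0,\xi^1)-H(t;\zeta^0,\zeta^1;\xi^0,\xi^1)\|\le\Lambda|\bar t-t|$ whenever both points are in $N_\varepsilon(\mathcal P)$; (ii) there are $L_0,L_1>0$ with $\|H(t;\bar\zeta^0,\bar\zeta^1;\xi^0,\xi^1)-H(t;\zeta^0,\zeta^1;\xi^0,\xi^1)\|\le L_0\|\bar\zeta^0-\zeta^0\|+L_1\|\bar\zeta^1-\zeta^1\|$ whenever both points are in $N_\varepsilon(\mathcal P)$; (iii) there are $C_0,C_1\ge0$ with $C_0+C_1<1$ and $\|H(t;\zeta^0,\zeta^1;\bar\xi^0,\bar\xi^1)-H(t;\zeta^0,\zeta^1;\xi^0,\xi^1)\|\le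 C_0\|\bar\xi^0-\xi^0\|+C_1\|\bar\xi^1-\xi^1\|$ whenever both points are in $N_\varepsilon(\mathcal P)$; (iv) $|h_1(X)|\le1$ for all $X\in N_\varepsilon(\mathcal P)$. Then there exist $\delta>0$ and $Z=(z_1,\dots,z_n)\in C^1([-\delta,\delta];\mathbb R^n)$ with $|z_1(t)|\le|t|$ and $(t;Z(t),Z(z_1(t));Z'(t),Z'(z_1(t)))\in N_\varepsilon(\mathcal P)$ for $|t|\le\delta$, such that $$Z'(t)=H\big(t;Z(t),Z(z_1(t));Z'(t),Z'(z_1(t))\big)\ \ (|t|\le\delta),\qquad Z(0)=0,\qquad Z'(0)=P.$$
   Context: Here $Z(z_1(t))$ denotes $(z_1(z_1(t)),\dots,z_n(z_1(t)))$ and similarly for $Z'(z_1(t))$. *)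

(* Defs.v *)
From Stdlib Require Fin.
From Stdlib Require Export Reals Lra.
Open Scope R_scope.

Definition vec (n : nat) := Fin.t n -> R.

Definition vzero {n} : vec n := fun _ => 0.
Definition vadd {n} (x y : vec n) : vec n := fun i => x i + y i.
Definition vsub {n} (x y : vec n) : vec n := fun i => x i - y i.
Definition vscal {n} (c : R) (x : vec n) : vec n := fun i => c * x i.

Definition is_norm {n} (N : vec n -> R) : Prop :=
  (forall x, 0 <= N x) /\
  (forall x, N x = 0 -> x = vzero) /\
  (forall c x, N (vscal c x) = Rabs c * N x) /\
  (forall x y, N (vadd x y) <= N x + N y).

(* Points of R^{4n+1} written (t; z0, z1; x0, x1). *)
Definition pt (n : nat) := (R * vec n * vec n * vec n * vec n)%type.

Definition pdist {n} (N : vec n -> R) (X Y : pt n) : R :=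
  match X, Y with
  | (t, z0, z1, x0, x1), (t', z0', z1', x0', x1') =>
      Rabs (t - t') + N (vsub z0 z0') + N (vsub z1 z1')
      + N (vsub x0 x0') + N (vsub x1 x1')
  end.

Definition is_open {n} (N : vec n -> R) (U : pt n -> Prop) : Prop :=
  forall X, U X -> exists r, 0 < r /\ forall Y, pdist N Y X < r -> U Y.

Definition cont_on {n} (N : vec n -> R) (U : pt n -> Prop)
  (H : R -> vec n -> vec n -> vec n -> vec n -> vec n) : Prop :=
  forall X, U X -> forall eps, 0 < eps -> exists d, 0 < d /\
    forall Y, U Y -> pdist N Y X < d ->
      match X, Y with
      | (t, z0, z1, x0, x1), (t', z0', z1', x0', x1') =>
          N (vsub (H t' z0' z1' x0' x1') (H t z0 z1 x0 x1)) < eps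
      end.

Definition Neps {n} (N : vec n -> R) (eps : R) (P : vec n)
  (t : R) (z0 z1 x0 x1 : vec n) : Prop :=
  Rabs t + N z0 + N z1 + N (vsub x0 P) + N (vsub x1 P) <= eps.

Definition deriv_on (a b : R) (f f' : R -> R) : Prop :=
  forall t, a <= t <= b -> forall eps, 0 < eps -> exists d, 0 < d /\
    forall s, a <= s <= b -> 0 < Rabs (s - t) < d ->
      Rabs ((f s - f t) / (s - t) - f' t) < eps.

Definition cont_interval (a b : R) (f : R -> R) : Prop :=
  forall t, a <= t <= b -> forall eps, 0 < eps -> exists d, 0 < d /\
    forall s, a <= s <= b -> Rabs (s - t) < d -> Rabs (f s - f t) < eps.

(* Main.v *)
Require Import Defs.
From Stdlib Require Import FunctionalExtensionality List.
Import ListNotations.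
Open Scope R_scope.


Lemma vext {n} (x y : vec n) : (forall i, x i = y i) -> x = y.
Proof. intros; apply functional_extensionality; auto. Qed.

Lemma N0 {n} (N : vec n -> R) : is_norm N -> N vzero = 0.
Proof.
  intros [H1 [H2 [H3 H4]]].
  replace (@vzero n) with (vscal 0 (@vzero n)) by (apply vext; intro; unfold vscal, vzero; ring).
  rewrite H3, Rabs_R0; ring.
Qed.

Lemma Nge0 {n} (N : vec n -> R) : is_norm N -> forall x, 0 <= N x.
Proof. intros [H1 _] ; auto. Qed.

Lemma Neq0 {n} (N : vec n -> R) : is_norm N -> forall x, N x = 0 -> x = vzero.
Proof. intros [_ [H2 _]]; auto. Qed.

Lemma Nscal {n} (N : vec n -> R) : is_norm N -> forall c x, N (vscal c x) = Rabs c * N x.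
Proof. intros [_ [_ [H3 _]]]; auto. Qed.

Lemma Ntri {n} (N : vec n -> R) : is_norm N -> forall x y, N (vadd x y) <= N x + N y.
Proof. intros [_ [_ [_ H4]]]; auto. Qed.

Lemma Nsym {n} (N : vec n -> R) : is_norm N -> forall x y, N (vsub x y) = N (vsub y x).
Proof.
  intros HN x y.
  replace (vsub x y) with (vscal (-1) (vsub y x)) by (apply vext; intro; unfold vscal, vsub; ring).
  rewrite Nscal by auto. replace (Rabs (-1)) with 1 by (rewrite Rabs_left; lra); ring.
Qed.

Lemma Ntri3 {n} (N : vec n -> R) : is_norm N -> forall x y z,
  N (vsub x z) <= N (vsub x y) + N (vsub y z).
Proof.
  intros HN x y z.
  replace (vsub x z) with (vadd (vsub x y) (vsub y z)) by (apply vext; intro; unfold vadd, vsub; ring).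
  apply Ntri; auto.
Qed.

Lemma Nsub0 {n} (N : vec n -> R) : is_norm N -> forall x, N (vsub x x) = 0.
Proof.
  intros HN x. replace (vsub x x) with (@vzero n) by (apply vext; intro; unfold vzero, vsub; ring).
  apply N0; auto.
Qed.

Lemma Nsub_eq {n} (N : vec n -> R) : is_norm N -> forall x y, N (vsub x y) <= 0 -> x = y.
Proof.
  intros HN x y H. assert (N (vsub x y) = 0) by (pose proof (Nge0 N HN (vsub x y)); lra).
  apply Neq0 in H0; auto. apply vext; intro i. apply (f_equal (fun f => f i)) in H0.
  unfold vsub, vzero in H0; lra.
Qed.

Fixpoint all_fin (n : nat) : list (Fin.t n) :=
  match n with
  | O => []
  | S k => Fin.F1 :: map Fin.FS (all_fin k)
  end.

Lemma all_fin_in n : forall i : Fin.t n, In i (all_fin n).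
Proof.
  induction n; intro i.
  - inversion i.
  - pattern i; apply Fin.caseS'; simpl; [left; auto|].
    intro j; right; apply in_map; auto.
Qed.

Definition ebasis {n} (i : Fin.t n) : vec n := fun j => if Fin.eq_dec i j then 1 else 0.

Definition supp {n} (l : list (Fin.t n)) (x : vec n) := forall j, ~ In j l -> x j = 0.

Definition zap {n} (i : Fin.t n) (x : vec n) : vec n := fun j => if Fin.eq_dec i j then 0 else x j.

Fixpoint sumN {n} (N : vec n -> R) (l : list (Fin.t n)) : R :=
  match l with [] => 0 | i :: l' => N (ebasis i) + sumN N l' end.

Lemma sumN_ge0 {n} N (HN : is_norm N) (l : list (Fin.t n)) : 0 <= sumN N l.
Proof. induction l; simpl; [lra|]. pose proof (Nge0 N HN (ebasis a)); lra. Qed.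

Lemma zap_supp {n} (i : Fin.t n) l x : supp (i :: l) x -> supp l (zap i x).
Proof.
  intros H j Hj. unfold zap. destruct (Fin.eq_dec i j); auto.
  apply H. intros [->|Hin]; auto.
Qed.

Lemma decomp {n} (i : Fin.t n) x : x = vadd (vscal (x i) (ebasis i)) (zap i x).
Proof.
  apply vext; intro j. unfold vadd, vscal, ebasis, zap.
  destruct (Fin.eq_dec i j); subst; ring.
Qed.

Lemma upper_supp {n} N (HN : is_norm N) (l : list (Fin.t n)) :
  forall x r, supp l x -> (forall j, Rabs (x j) <= r) -> N x <= r * sumN N l.
Proof.
  induction l as [|i l IH]; intros x r Hs Hr.
  - replace x with (@vzero n). rewrite N0 by auto. simpl; lra.
    apply vext; intro j; unfold vzero; symmetry; apply Hs; simpl; auto.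
  - rewrite (decomp i x). eapply Rle_trans; [apply Ntri; auto|].
    rewrite Nscal by auto. simpl.
    assert (N (zap i x) <= r * sumN N l).
    { apply IH. apply zap_supp; auto. intro j; unfold zap; destruct (Fin.eq_dec i j).
      rewrite Rabs_R0; specialize (Hr j); pose proof (Rabs_pos (x j)); lra. auto. }
    pose proof (Nge0 N HN (ebasis i)). pose proof (Hr i).
    apply Rmult_le_compat_r with (r := N (ebasis i)) in H1; auto. lra.
Qed.

Lemma upper_bound {n} N (HN : is_norm N) :
  exists B, 0 <= B /\ forall (x : vec n) r, (forall j, Rabs (x j) <= r) -> N x <= B * r.
Proof.
  exists (sumN N (all_fin n)). split. apply sumN_ge0; auto.
  intros x r Hr. rewrite Rmult_comm. apply upper_supp; auto.
  intros j Hj; exfalso; apply Hj, all_fin_in.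
Qed.
From Stdlib Require Import ClassicalEpsilon Classical Lia.

Definition to0 (b : nat -> R) := forall eps, 0 < eps -> exists K, forall k, (K <= k)%nat -> b k < eps.

Lemma le_of_to0 (x : R) (b : nat -> R) : to0 b -> (forall k, x <= b k) -> x <= 0.
Proof.
  intros Hb H. apply Rnot_lt_le; intro Hx.
  destruct (Hb x Hx) as [K HK]. specialize (HK K (le_n K)). specialize (H K). lra.
Qed.

Lemma cauchy_lim (u b : nat -> R) :
  (forall k l, (k <= l)%nat -> Rabs (u k - u l) <= b k) -> to0 b ->
  {l | forall k, Rabs (u k - l) <= b k}.
Proof.
  intros Hub Hb.
  assert (HC : Cauchy_crit u).
  { intros eps Heps. destruct (Hb (eps/2)) as [K HK]; [lra|].
    exists K. intros n m Hn Hm. unfold R_dist.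
    specialize (HK K (le_n K)).
    pose proof (Hub K n Hn). pose proof (Hub K m Hm).
    rewrite Rabs_minus_sym in H.
    pose proof (Rabs_triang (u n - u K) (u K - u m)).
    replace (u n - u K + (u K - u m)) with (u n - u m) in H1 by ring. lra. }
  destruct (R_complete u HC) as [l Hl]. exists l.
  intro k. apply Rnot_lt_le; intro Hk.
  destruct (Hl (Rabs (u k - l) - b k)) as [N0 HN0]; [lra|].
  specialize (HN0 (max k N0) (Nat.le_max_r _ _)). unfold R_dist in HN0.
  pose proof (Hub k (max k N0) (Nat.le_max_l _ _)).
  pose proof (Rabs_triang (u k - u (max k N0)) (u (max k N0) - l)).
  replace (u k - u (max k N0) + (u (max k N0) - l)) with (u k - l) in H0 by ring. lra.
Qed.

Lemma to0_inv (c : R) : to0 (fun k => c / (INR k + 1)).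
Proof.
  intros eps Heps. destruct (INR_archimed eps (Rabs c) Heps) as [K HK].
  exists K. intros k Hk. apply le_INR in Hk.
  assert (0 < INR k + 1) by (pose proof (pos_INR k); lra).
  apply Rmult_lt_reg_r with (INR k + 1); auto.
  unfold Rdiv; rewrite Rmult_assoc, Rinv_l by lra.
  pose proof (Rle_abs c). nra.
Qed.

Lemma Nsub_le {n} N (HN : is_norm N) (x y : vec n) : N (vsub x y) <= N x + N y.
Proof.
  replace (vsub x y) with (vadd x (vscal (-1) y)) by (apply vext; intro; unfold vadd, vsub, vscal; ring).
  eapply Rle_trans; [apply Ntri; auto|]. rewrite Nscal by auto.
  replace (Rabs (-1)) with 1 by (rewrite Rabs_left; lra). lra.
Qed.

Lemma supp_vsub {n} l (x y : vec n) : supp l x -> supp l y -> supp l (vsub x y).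
Proof. intros Hx Hy j Hj; unfold vsub; rewrite Hx, Hy; auto; ring. Qed.

Lemma key_step {n} N (HN : is_norm N) (i : Fin.t n) (l : list (Fin.t n)) A' :
  0 <= A' -> (forall x, supp l x -> forall j, Rabs (x j) <= A' * N x) ->
  exists c, 0 <= c /\ forall x, supp (i :: l) x -> Rabs (x i) <= c * N x.
Proof.
  intros HA' IH. apply NNPP; intro Hno.
  assert (Hk : forall k : nat, exists x, supp (i :: l) x /\ (INR k + 1) * N x < Rabs (x i)).
  { intro k. apply NNPP; intro Hk. apply Hno. exists (INR k + 1). split.
    pose proof (pos_INR k); lra. intros x Hx. apply Rnot_lt_le; intro H.
    apply Hk; exists x; auto. }
  set (xs := fun k => proj1_sig (constructive_indefinite_description _ (Hk k))).
  assert (Hxs : forall k, supp (i :: l) (xs k) /\ (INR k + 1) * N (xs k) < Rabs (xs k i)).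
  { intro k; unfold xs; destruct (constructive_indefinite_description _ (Hk k)); auto. }
  set (v := fun k => vscal (/ xs k i) (xs k)).
  assert (Hvi : forall k, v k i = 1).
  { intro k. unfold v, vscal. destruct (Hxs k) as [_ H].
    assert (xs k i <> 0). { intro E; rewrite E, Rabs_R0 in H. pose proof (pos_INR k).
      pose proof (Nge0 N HN (xs k)). nra. }
    field; auto. }
  assert (Hvn : forall k, N (v k) <= 1 / (INR k + 1)).
  { intro k. unfold v. rewrite Nscal by auto. destruct (Hxs k) as [_ H].
    assert (0 < Rabs (xs k i)). { pose proof (pos_INR k).
      pose proof (Nge0 N HN (xs k)). nra. }
    rewrite Rabs_inv. assert (0 < INR k + 1) by (pose proof (pos_INR k); lra).
    apply Rmult_le_reg_l with (Rabs (xs k i)); auto.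
    rewrite <- Rmult_assoc, Rinv_r by lra. 
    apply Rmult_le_reg_l with (INR k + 1); auto. field_simplify; try lra. }
  assert (Hvs : forall k, supp (i :: l) (v k)).
  { intros k j Hj. unfold v, vscal. rewrite (proj1 (Hxs k) j Hj); ring. }
  set (y := fun k => zap i (v k)).
  assert (Hys : forall k, supp l (y k)) by (intro k; apply zap_supp; auto).
  assert (Hyv : forall k k', vsub (y k) (y k') = vsub (v k) (v k')).
  { intros k k'; apply vext; intro j; unfold y, zap, vsub.
    destruct (Fin.eq_dec i j); subst; [rewrite !Hvi|]; ring. }
  set (b := fun k => (2 * A') / (INR k + 1)).
  assert (Hcy : forall j k k', (k <= k')%nat -> Rabs (y k j - y k' j) <= b k).
  { intros j k k' Hkk. pose proof (IH _ (supp_vsub l _ _ (Hys k) (Hys k')) j) as H.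
    unfold vsub at 1 in H. eapply Rle_trans; [apply H|].
    rewrite Hyv. pose proof (Nsub_le N HN (v k) (v k')).
    pose proof (Hvn k). pose proof (Hvn k').
    apply le_INR in Hkk. assert (0 < INR k + 1) by (pose proof (pos_INR k); lra).
    assert (1 / (INR k' + 1) <= 1 / (INR k + 1)).
    { apply Rmult_le_compat_l; [lra|]. apply Rinv_le_contravar; lra. }
    unfold b. replace (2 * A' / (INR k + 1)) with (A' * (2 * (1 / (INR k + 1)))) by (field; lra).
    apply Rmult_le_compat_l; auto. lra. }
  set (yl := fun j => proj1_sig (cauchy_lim (fun k => y k j) b (Hcy j) (to0_inv _))).
  assert (Hyl : forall j k, Rabs (y k j - yl j) <= b k).
  { intros j k. unfold yl. destruct (cauchy_lim _ _ _ _) as [z Hz]; simpl; auto. }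
  assert (Hyli : yl i = 0).
  { assert (Rabs (yl i) <= 0).
    { apply (le_of_to0 _ b (to0_inv _)). intro k. specialize (Hyl i k).
      unfold y, zap in Hyl. destruct (Fin.eq_dec i i) as [_|C]; [|congruence].
      rewrite Rabs_minus_sym, Rminus_0_r in Hyl; auto. }
    pose proof (Rabs_pos (yl i)). destruct (Rcase_abs (yl i)); [rewrite Rabs_left in H|rewrite Rabs_right in H]; lra. }
  destruct (upper_bound N HN) as [B [HB0 HB]].
  set (e := ebasis i).
  assert (HNe : N (vadd e yl) <= 0).
  { apply (le_of_to0 _ (fun k => (1 + B * (2 * A')) / (INR k + 1)) (to0_inv _)).
    intro k.
    replace (vadd e yl) with (vadd (v k) (vsub yl (y k))).
    2:{ apply vext; intro j. unfold vadd, vsub, e, ebasis, y, zap.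
        destruct (Fin.eq_dec i j); subst; [rewrite Hvi, Hyli|]; ring. }
    eapply Rle_trans; [apply Ntri; auto|].
    assert (N (vsub yl (y k)) <= B * b k).
    { apply HB. intro j. unfold vsub. rewrite Rabs_minus_sym. apply Hyl. }
    pose proof (Hvn k). unfold b in H.
    assert (0 < INR k + 1) by (pose proof (pos_INR k); lra).
    replace ((1 + B * (2 * A')) / (INR k + 1)) with (1 / (INR k + 1) + B * (2 * A' / (INR k + 1))) by (field; lra).
    lra. }
  assert (HNe0 : N (vadd e yl) = 0) by (pose proof (Nge0 N HN (vadd e yl)); lra).
  apply (Neq0 N HN) in HNe0.
  apply (f_equal (fun f => f i)) in HNe0. unfold vadd, vzero, e, ebasis in HNe0.
  destruct (Fin.eq_dec i i) as [_|C]; [|congruence]. lra.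
Qed.

Lemma lower_supp {n} N (HN : is_norm N) (l : list (Fin.t n)) :
  exists A, 0 <= A /\ forall x, supp l x -> forall j, Rabs (x j) <= A * N x.
Proof.
  induction l as [|i l [A' [HA' IH]]].
  - exists 0. split; [lra|]. intros x Hx j. rewrite Hx by (simpl; auto).
    rewrite Rabs_R0; lra.
  - destruct (key_step N HN i l A' HA' IH) as [c [Hc Hci]].
    set (ne := N (ebasis i)). assert (0 <= ne) by apply (Nge0 N HN).
    exists (c + A' * (1 + c * ne)). split. { apply Rplus_le_le_0_compat; auto.
      apply Rmult_le_pos; auto. pose proof (Rmult_le_pos _ _ Hc H). lra. }
    intros x Hx j. pose proof (Nge0 N HN x) as Hx0.
    assert (0 <= A' * (1 + c * ne) * N x).
    { apply Rmult_le_pos; auto. apply Rmult_le_pos; auto. pose proof (Rmult_le_pos _ _ Hc H). lra. }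
    destruct (Fin.eq_dec i j) as [<-|Hij].
    + pose proof (Hci x Hx). nra.
    + assert (x j = zap i x j) by (unfold zap; destruct (Fin.eq_dec i j); [congruence|auto]).
      rewrite H1. eapply Rle_trans; [apply IH; apply zap_supp; auto|].
      assert (N (zap i x) <= N x + Rabs (x i) * ne).
      { replace (zap i x) with (vsub x (vscal (x i) (ebasis i))).
        eapply Rle_trans; [apply Nsub_le; auto|]. rewrite Nscal by auto. unfold ne; lra.
        apply vext; intro k; unfold vsub, vscal, zap, ebasis; destruct (Fin.eq_dec i k); [subst|]; ring. }
      pose proof (Hci x Hx).
      assert (N (zap i x) <= (1 + c * ne) * N x).
      { eapply Rle_trans; [apply H2|]. pose proof (Rmult_le_compat_r ne _ _ H H3). nra. }
      pose proof (Rmult_le_compat_l A' _ _ HA' H4). nra.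
Qed.

Lemma lower_bound {n} N (HN : is_norm N) :
  exists A, 0 <= A /\ forall (x : vec n) j, Rabs (x j) <= A * N x.
Proof.
  destruct (lower_supp N HN (all_fin n)) as [A [HA H]]. exists A; split; auto.
  intros x j; apply H. intros k Hk; exfalso; apply Hk, all_fin_in.
Qed.
From Coquelicot Require Import Coquelicot.

Definition lipR (c : R) (f : R -> R) := forall t s, Rabs (f t - f s) <= c * Rabs (t - s).

Lemma lip_cont c f : 0 <= c -> lipR c f -> forall x, continuous f x.
Proof.
  intros Hc Hf x. apply continuity_pt_filterlim.
  intros eps Heps. exists (eps / (c + 1)). split.
  { apply Rdiv_lt_0_compat; lra. }
  intros y [_ Hy]. simpl in *. unfold R_dist in *.
  eapply Rle_lt_trans; [apply Hf|].
  assert (c * Rabs (y - x) <= c * (eps / (c + 1))) by (apply Rmult_le_compat_l; lra).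
  assert (c * (eps / (c+1)) < eps).
  { apply Rmult_lt_reg_r with (c + 1); [lra|]. field_simplify; lra. }
  lra.
Qed.

Definition allcont (f : R -> R) := forall x, continuous f x.

Lemma exR f a b : allcont f -> ex_RInt f a b.
Proof. intros H; apply (@ex_RInt_continuous R_CompleteNormedModule); intros; apply H. Qed.

Lemma RInt_diff f a b : allcont f -> RInt f 0 a - RInt f 0 b = RInt f b a.
Proof.
  intros H. pose proof (RInt_Chasles f b 0 a (exR f b 0 H) (exR f 0 a H)) as E.
  pose proof (opp_RInt_swap f 0 b (exR f 0 b H)) as E2.
  change (RInt f b 0 + RInt f 0 a = RInt f b a) in E.
  change (- RInt f 0 b = RInt f b 0) in E2. lra.
Qed.

Lemma RInt_bnd f a b M : allcont f -> (forall s, Rabs (f s) <= M) ->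
  Rabs (RInt f b a) <= M * Rabs (a - b).
Proof.
  intros H HM. destruct (Rle_dec b a).
  - rewrite (Rabs_right (a - b)) by lra. rewrite Rmult_comm. apply abs_RInt_le_const; auto. apply exR; auto.
  - rewrite <- opp_RInt_swap by (apply exR; auto).
    change (Rabs (- RInt f a b) <= M * Rabs (a - b)). rewrite Rabs_Ropp.
    rewrite (Rabs_left (a - b)) by lra. replace (- (a - b)) with (b - a) by ring.
    rewrite Rmult_comm. apply abs_RInt_le_const; auto; try lra. apply exR; auto.
Qed.

Lemma RInt_sub f g a b : allcont f -> allcont g ->
  RInt (fun s => f s - g s) a b = RInt f a b - RInt g a b.
Proof.
  intros Hf Hg. apply (RInt_minus f g a b); apply exR; auto.
Qed.

Lemma RInt_der f t : allcont f -> derivable_pt_lim (fun t => RInt f 0 t) t (f t).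
Proof.
  intros H. apply is_derive_Reals. apply (is_derive_RInt f (fun t => RInt f 0 t) 0 t).
  - apply filter_forall. intro b. apply (@RInt_correct R_CompleteNormedModule), exR; auto.
  - apply H.
Qed.

Lemma RInt_0 f : RInt f 0 0 = 0.
Proof. apply (@RInt_point R_CompleteNormedModule). Qed.

Definition integ {n} (W : R -> vec n) : R -> vec n := fun t i => RInt (fun s => W s i) 0 t.

Definition ccont {n} (W : R -> vec n) := forall i, allcont (fun s => W s i).

Lemma comp_lip {n} (N : vec n -> R) A (HA : forall x j, Rabs (x j) <= A * N x) (W : R -> vec n) K :
  0 <= A -> 0 <= K -> (forall t s, N (vsub (W t) (W s)) <= K * Rabs (t - s)) ->
  forall i t s, Rabs (W t i - W s i) <= (A * K) * Rabs (t - s).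
Proof.
  intros HA0 HK HW i t s. specialize (HA (vsub (W t) (W s)) i). unfold vsub at 1 in HA.
  eapply Rle_trans; [apply HA|]. rewrite Rmult_assoc. apply Rmult_le_compat_l; auto.
Qed.

Lemma lip_ccont {n} (N : vec n -> R) A (HA : forall x j, Rabs (x j) <= A * N x) (W : R -> vec n) K :
  0 <= A -> 0 <= K -> (forall t s, N (vsub (W t) (W s)) <= K * Rabs (t - s)) -> ccont W.
Proof.
  intros HA0 HK HW i x. apply (lip_cont (A * K)). apply Rmult_le_pos; auto.
  intros t s. apply (comp_lip N A HA W K); auto.
Qed.

Lemma integ0 {n} (W : R -> vec n) : integ W 0 = vzero.
Proof. apply vext; intro i; unfold integ, vzero. apply RInt_0. Qed.

Lemma integ_comp_lip {n} (W : R -> vec n) i c : ccont W -> (forall s, Rabs (W s i) <= c) ->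
  forall a b, Rabs (integ W a i - integ W b i) <= c * Rabs (a - b).
Proof.
  intros HW Hc a b. unfold integ. rewrite RInt_diff by apply HW. apply RInt_bnd; auto.
Qed.

Lemma integ_lip {n} (N : vec n -> R) A B (HA0 : 0 <= A)
  (HA : forall x j, Rabs (x j) <= A * N x) (HB : forall (x : vec n) r, (forall j, Rabs (x j) <= r) -> N x <= B * r)
  (W : R -> vec n) M : ccont W -> (forall s, N (W s) <= M) ->
  forall a b, N (vsub (integ W a) (integ W b)) <= B * (A * M) * Rabs (a - b).
Proof.
  intros HW HM a b. rewrite Rmult_assoc. apply HB. intro j. unfold vsub.
  apply integ_comp_lip; auto. intro s. eapply Rle_trans; [apply HA|].
  apply Rmult_le_compat_l; auto.
Qed.

Lemma integ_diff_comp {n} (N : vec n -> R) A (HA0 : 0 <= A)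
  (HA : forall x j, Rabs (x j) <= A * N x)
  (W V : R -> vec n) r : ccont W -> ccont V -> (forall s, N (vsub (W s) (V s)) <= r) ->
  forall a j, Rabs (integ W a j - integ V a j) <= (A * r) * Rabs a.
Proof.
  intros HW HV Hr a j. unfold integ. rewrite <- RInt_sub by auto.
  replace (Rabs a) with (Rabs (a - 0)) by (f_equal; ring).
  apply RInt_bnd.
  - intro x. apply (@continuous_minus R_UniformSpace R_AbsRing R_NormedModule (fun s => W s j) (fun s => V s j)); [apply HW|apply HV].
  - intro s. specialize (HA (vsub (W s) (V s)) j). unfold vsub at 1 in HA.
    eapply Rle_trans; [apply HA|]. apply Rmult_le_compat_l; auto.
Qed.

Lemma integ_diff {n} (N : vec n -> R) A B (HA0 : 0 <= A)
  (HA : forall x j, Rabs (x j) <= A * N x) (HB : forall (x : vec n) r, (forall j, Rabs (x j) <= r) -> N x <= B * r)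
  (W V : R -> vec n) r : ccont W -> ccont V -> (forall s, N (vsub (W s) (V s)) <= r) ->
  forall a, N (vsub (integ W a) (integ V a)) <= B * (A * r) * Rabs a.
Proof.
  intros HW HV Hr a. rewrite Rmult_assoc. apply HB. intro j. unfold vsub at 1.
  apply (integ_diff_comp N A); auto.
Qed.

Lemma to0_geo c q : 0 <= q < 1 -> to0 (fun k => c * q ^ k).
Proof.
  intros Hq eps Heps. destruct (Req_dec c 0) as [->|Hc].
  - exists O; intros; lra.
  - destruct (pow_lt_1_zero q ltac:(rewrite Rabs_right; lra) (eps / Rabs c)) as [K HK].
    { apply Rdiv_lt_0_compat; auto. apply Rabs_pos_lt; auto. }
    exists K. intros k Hk. specialize (HK k Hk).
    rewrite Rabs_right in HK by (apply Rle_ge, pow_le; lra).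
    pose proof (Rabs_pos_lt c Hc). pose proof (Rle_abs c).
    assert (Rabs c * q ^ k < eps).
    { apply Rmult_lt_reg_r with (/ Rabs c). apply Rinv_0_lt_compat; auto.
      replace (Rabs c * q ^ k * / Rabs c) with (q ^ k) by (field; lra). auto. }
    pose proof (pow_le q k ltac:(lra)). nra.
Qed.

Definition clamp (d t : R) := Rmax (- d) (Rmin d t).

Lemma clamp_lip d t s : 0 <= d -> Rabs (clamp d t - clamp d s) <= Rabs (t - s).
Proof. intros; unfold clamp, Rmax, Rmin; repeat destruct Rle_dec; split_Rabs; lra. Qed.

Lemma clamp_rng d t : 0 <= d -> Rabs (clamp d t) <= d.
Proof. intros; unfold clamp, Rmax, Rmin; repeat destruct Rle_dec; split_Rabs; lra. Qed.

Lemma clamp_id d t : Rabs t <= d -> clamp d t = t.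
Proof. intros; unfold clamp, Rmax, Rmin; repeat destruct Rle_dec; split_Rabs; lra. Qed.
Theorem theorem4p1 (m : nat)
  (N : vec (S m) -> R) (HN : is_norm N)
  (U : pt (S m) -> Prop) (HU : is_open N U)
  (H : R -> vec (S m) -> vec (S m) -> vec (S m) -> vec (S m) -> vec (S m))
  (Hcont : cont_on N U H)
  (P : vec (S m))
  (HP : P = H 0 vzero vzero P P)
  (HP1 : Rabs (P Fin.F1) <= 1)
  (eps : R) (Heps : 0 < eps)
  (Hdom : forall t z0 z1 x0 x1, Neps N eps P t z0 z1 x0 x1 -> U (t, z0, z1, x0, x1))
  (Lam : R) (HLam : 0 < Lam)
  (Hi : forall t t' z0 z1 x0 x1,
      Neps N eps P t z0 z1 x0 x1 -> Neps N eps P t' z0 z1 x0 x1 ->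
      N (vsub (H t' z0 z1 x0 x1) (H t z0 z1 x0 x1)) <= Lam * Rabs (t' - t))
  (L0 L1 : R) (HL0 : 0 < L0) (HL1 : 0 < L1)
  (Hii : forall t z0 z1 z0' z1' x0 x1,
      Neps N eps P t z0 z1 x0 x1 -> Neps N eps P t z0' z1' x0 x1 ->
      N (vsub (H t z0' z1' x0 x1) (H t z0 z1 x0 x1))
        <= L0 * N (vsub z0' z0) + L1 * N (vsub z1' z1))
  (C0 C1 : R) (HC0 : 0 <= C0) (HC1 : 0 <= C1) (HC : C0 + C1 < 1)
  (Hiii : forall t z0 z1 x0 x1 x0' x1',
      Neps N eps P t z0 z1 x0 x1 -> Neps N eps P t z0 z1 x0' x1' ->
      N (vsub (H t z0 z1 x0' x1') (H t z0 z1 x0 x1))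
        <= C0 * N (vsub x0' x0) + C1 * N (vsub x1' x1))
  (Hiv : forall t z0 z1 x0 x1,
      Neps N eps P t z0 z1 x0 x1 -> Rabs (H t z0 z1 x0 x1 Fin.F1) <= 1) :
  exists (delta : R) (Z Z' : R -> vec (S m)),
    0 < delta /\
    (forall i, deriv_on (- delta) delta (fun t => Z t i) (fun t => Z' t i)) /\
    (forall i, cont_interval (- delta) delta (fun t => Z' t i)) /\
    (forall t, Rabs t <= delta ->
       Rabs (Z t Fin.F1) <= Rabs t /\
       Neps N eps P t (Z t) (Z (Z t Fin.F1)) (Z' t) (Z' (Z t Fin.F1)) /\
       Z' t = H t (Z t) (Z (Z t Fin.F1)) (Z' t) (Z' (Z t Fin.F1))) /\
    Z 0 = vzero /\ Z' 0 = P.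
Proof.
  set (n := S m) in *.
  destruct (lower_bound N HN) as [A [HA0 HA]].
  destruct (upper_bound N HN) as [B [HB0 HB]].
  pose proof (Nge0 N HN) as Npos.
  set (kap := B * A).
  assert (Hkap : 0 <= kap) by (apply Rmult_le_pos; auto).
  set (M := N P + 1).
  assert (HM : 1 <= M) by (unfold M; pose proof (Npos P); lra).
  set (C := C0 + C1).
  assert (HC' : 0 < 1 - C) by (unfold C; lra).
  set (K := (Lam + (L0 + L1) * (kap * M)) / (1 - C)).
  assert (HKeq : K * (1 - C) = Lam + (L0 + L1) * (kap * M)) by (unfold K; field; lra).
  assert (HK : 0 < K).
  { unfold K. apply Rdiv_lt_0_compat; auto. pose proof (Rmult_le_pos (kap) M Hkap ltac:(lra)) as Ha.
    pose proof (Rmult_le_pos (L0 + L1) (kap * M) ltac:(lra) Ha). lra. }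
  set (Q := L0 * kap + L1 * kap + L1 * kap * M * A + C1 * K * A).
  assert (HQ : 0 <= Q).
  { unfold Q. pose proof (Rmult_le_pos _ _ (Rlt_le _ _ HL0) Hkap) as Q1.
    pose proof (Rmult_le_pos _ _ (Rlt_le _ _ HL1) Hkap) as Q2.
    pose proof (Rmult_le_pos _ _ (Rmult_le_pos (L1 * kap) M Q2 (Rle_trans _ _ _ Rle_0_1 HM)) HA0) as Q3.
    pose proof (Rmult_le_pos _ _ (Rmult_le_pos _ _ HC1 (Rlt_le _ _ HK)) HA0) as Q4. lra. }
  set (G := 1 + K + (1 + 2 * kap * M + 2 * K) / eps + 2 * Q / (1 - C)).
  assert (HG1 : K <= G /\ (1 + 2 * kap * M + 2 * K) / eps <= G /\ 2 * Q / (1 - C) <= G /\ 0 < G).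
  { assert (0 <= (1 + 2 * kap * M + 2 * K) / eps).
    { apply Rdiv_le_0_compat; auto. pose proof (Rmult_le_pos kap M Hkap (Rle_trans _ _ _ Rle_0_1 HM)). lra. }
    assert (0 <= 2 * Q / (1 - C)) by (apply Rdiv_le_0_compat; lra).
    unfold G; lra. }
  set (d := / G).
  assert (Hd : 0 < d) by (apply Rinv_0_lt_compat; lra).
  assert (HdG : d * G = 1) by (unfold d; field; lra).
  assert (HKd : K * d <= 1) by (destruct HG1 as [H1 _]; nra).
  assert (Hde : d * (1 + 2 * kap * M + 2 * K) <= eps).
  { destruct HG1 as [_ [H1 _]].
    assert (d * ((1 + 2 * kap * M + 2 * K) / eps) <= 1) by nra.
    replace (d * (1 + 2 * kap * M + 2 * K)) with (d * ((1 + 2 * kap * M + 2 * K) / eps) * eps) by (field; lra).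
    nra. }
  assert (HdQ : d * Q <= (1 - C) / 2).
  { destruct HG1 as [_ [_ [H1 _]]].
    assert (d * (2 * Q / (1 - C)) <= 1) by nra.
    replace (d * Q) with (d * (2 * Q / (1 - C)) * ((1 - C) / 2)) by (field; lra). nra. }
  set (q := C + d * Q).
  assert (Hq : 0 <= q < 1) by (unfold q; split; [unfold C; nra|nra]).
  assert (HM0 : 0 <= M) by lra.
  pose (SW := fun W : R -> vec n =>
    (forall t s, N (vsub (W t) (W s)) <= K * Rabs (t - s)) /\ W 0 = P /\
    (forall t, Rabs (W t Fin.F1) <= 1) /\ (forall t, N (vsub (W t) P) <= K * d)).
  assert (vsub0 : forall x : vec n, vsub x vzero = x) by (intro x; apply vext; intro; unfold vsub, vzero; ring).
  assert (S_cc : forall W, SW W -> ccont W).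
  { intros W [HW _]. apply (lip_ccont N A HA W K); auto; lra. }
  assert (S_M : forall W, SW W -> forall s, N (W s) <= M).
  { intros W (_ & _ & _ & HW) s.
    replace (W s) with (vadd (vsub (W s) P) P) by (apply vext; intro; unfold vadd, vsub; ring).
    eapply Rle_trans; [apply Ntri; auto|]. specialize (HW s). unfold M; lra. }
  assert (S_Zlip : forall W, SW W -> forall a b, N (vsub (integ W a) (integ W b)) <= kap * M * Rabs (a - b)).
  { intros W HW a b. unfold kap. replace (B * A * M) with (B * (A * M)) by ring.
    apply (integ_lip N A B HA0 HA HB W M); auto. }
  assert (S_z1 : forall W, SW W -> forall a b, Rabs (integ W a Fin.F1 - integ W b Fin.F1) <= Rabs (a - b)).
  { intros W HW a b. rewrite <- (Rmult_1_l (Rabs (a - b))). apply integ_comp_lip; auto.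
    apply HW. }
  assert (S_z1' : forall W, SW W -> forall a, Rabs (integ W a Fin.F1) <= Rabs a).
  { intros W HW a. pose proof (S_z1 W HW a 0). rewrite integ0 in H0. unfold vzero in H0.
    rewrite !Rminus_0_r in H0; auto. }
  assert (S_Z : forall W, SW W -> forall a, Rabs a <= d -> N (integ W a) <= kap * M * d).
  { intros W HW a Ha. pose proof (S_Zlip W HW a 0). rewrite integ0, vsub0, Rminus_0_r in H0.
    eapply Rle_trans; [apply H0|]. apply Rmult_le_compat_l; auto. apply Rmult_le_pos; auto. }
  assert (NC : forall u z0 z1 x0 x1, Rabs u <= d -> N z0 <= kap * M * d -> N z1 <= kap * M * d ->
     N (vsub x0 P) <= K * d -> N (vsub x1 P) <= K * d -> Neps N eps P u z0 z1 x0 x1).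
  { intros u z0 z1 x0 x1 H1 H2 H3 H4 H5. unfold Neps. lra. }
  assert (PTW : forall W, SW W -> forall u, Rabs u <= d ->
     Neps N eps P u (integ W u) (integ W (integ W u Fin.F1)) (W u) (W (integ W u Fin.F1))).
  { intros W HW u Hu. pose proof (S_z1' W HW u).
    apply NC; auto; try apply S_Z; auto; try lra; apply HW. }
  pose (F := fun (W : R -> vec n) (u : R) =>
    H u (integ W u) (integ W (integ W u Fin.F1)) (W u) (W (integ W u Fin.F1))).
  pose (T := fun (W : R -> vec n) (t : R) => F W (clamp d t)).
  assert (HKid : Lam + (L0 + L1) * (kap * M) + C * K = K) by lra.
  assert (F0 : forall W, SW W -> F W 0 = P).
  { intros W HW. unfold F. rewrite integ0.
    replace (@vzero n Fin.F1) with 0 by reflexivity. rewrite integ0.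
    destruct HW as (_ & HW0 & _). rewrite HW0. symmetry; exact HP. }
  assert (FLip : forall W, SW W -> forall u v, Rabs u <= d -> Rabs v <= d ->
     N (vsub (F W u) (F W v)) <= K * Rabs (u - v)).
  { intros W HW u v Hu Hv.
    pose proof HW as (HWl & _ & _ & HWP).
    set (zu := integ W u Fin.F1). set (zv := integ W v Fin.F1).
    assert (Hzu : Rabs zu <= d) by (pose proof (S_z1' W HW u); unfold zu; lra).
    assert (Hzv : Rabs zv <= d) by (pose proof (S_z1' W HW v); unfold zv; lra).
    assert (Hzz : Rabs (zv - zu) <= Rabs (u - v)).
    { unfold zu, zv. rewrite Rabs_minus_sym. apply S_z1; auto. }
    set (X2 := H v (integ W u) (integ W zu) (W u) (W zu)).
    set (X3 := H v (integ W v) (integ W zv) (W u) (W zu)).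
    assert (N1 : Neps N eps P v (integ W u) (integ W zu) (W u) (W zu))
      by (apply NC; auto; apply S_Z; auto).
    assert (N2 : Neps N eps P v (integ W v) (integ W zv) (W u) (W zu))
      by (apply NC; auto; apply S_Z; auto).
    assert (N3 : Neps N eps P v (integ W v) (integ W zv) (W v) (W zv))
      by (apply NC; auto; apply S_Z; auto).
    assert (N0' : Neps N eps P u (integ W u) (integ W zu) (W u) (W zu))
      by (apply NC; auto; apply S_Z; auto).
    assert (E1 : N (vsub (F W u) X2) <= Lam * Rabs (u - v)).
    { rewrite Nsym by auto. rewrite (Rabs_minus_sym u v). apply Hi; auto. }
    assert (E2 : N (vsub X2 X3) <= L0 * (kap * M * Rabs (u - v)) + L1 * (kap * M * Rabs (u - v))).
    { rewrite Nsym by auto. eapply Rle_trans; [apply Hii; auto|].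
      pose proof (S_Zlip W HW v u) as G1. pose proof (S_Zlip W HW zv zu) as G2.
      rewrite (Rabs_minus_sym v u) in G1.
      assert (kap * M * Rabs (zv - zu) <= kap * M * Rabs (u - v)) by
        (apply Rmult_le_compat_l; auto; apply Rmult_le_pos; auto).
      unfold zu, zv in *. apply Rplus_le_compat; apply Rmult_le_compat_l; lra. }
    assert (E3 : N (vsub X3 (F W v)) <= C0 * (K * Rabs (u - v)) + C1 * (K * Rabs (u - v))).
    { rewrite Nsym by auto. eapply Rle_trans; [apply Hiii; auto|].
      pose proof (HWl v u) as G1. pose proof (HWl zv zu) as G2.
      rewrite (Rabs_minus_sym v u) in G1.
      assert (K * Rabs (zv - zu) <= K * Rabs (u - v)) by (apply Rmult_le_compat_l; lra).
      unfold zu, zv in *. apply Rplus_le_compat; apply Rmult_le_compat_l; lra. }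
    pose proof (Ntri3 N HN (F W u) X2 (F W v)). pose proof (Ntri3 N HN X2 X3 (F W v)).
    replace (K * Rabs (u - v)) with ((Lam + (L0 + L1) * (kap * M) + C * K) * Rabs (u - v)) by (rewrite HKid; ring).
    unfold C. lra. }
  assert (TS : forall W, SW W -> SW (T W)).
  { intros W HW. assert (Hd0 : 0 <= d) by lra.
    split; [|split; [|split]].
    - intros t s. unfold T. eapply Rle_trans; [apply FLip; auto; apply clamp_rng; auto|].
      apply Rmult_le_compat_l; [lra|apply clamp_lip; auto].
    - unfold T. rewrite clamp_id by (rewrite Rabs_R0; lra). apply F0; auto.
    - intro t. unfold T, F. apply Hiv. apply PTW; auto. apply clamp_rng; auto.
    - intro t. rewrite <- (F0 W HW). unfold T.
      eapply Rle_trans; [apply FLip; auto; [apply clamp_rng; auto|rewrite Rabs_R0; lra]|].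
      apply Rmult_le_compat_l; [lra|]. rewrite Rminus_0_r. apply clamp_rng; auto. }
  assert (TC : forall W V r, SW W -> SW V -> (forall t, N (vsub (W t) (V t)) <= r) ->
     forall t, N (vsub (T W t) (T V t)) <= q * r).
  { intros W V r HW HV Hr t. assert (Hd0 : 0 <= d) by lra.
    assert (Hr0 : 0 <= r) by (pose proof (Hr 0); pose proof (Npos (vsub (W 0) (V 0))); lra).
    assert (Hr' : forall s, N (vsub (V s) (W s)) <= r) by (intro s; rewrite Nsym by auto; auto).
    pose proof HW as (HWl & _ & _ & HWP). pose proof HV as (HVl & _ & _ & HVP).
    unfold T. set (u := clamp d t).
    assert (Hu : Rabs u <= d) by (apply clamp_rng; auto).
    assert (Hzw : Rabs (integ W u Fin.F1) <= d) by (pose proof (S_z1' W HW u); lra).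
    assert (Hzv : Rabs (integ V u Fin.F1) <= d) by (pose proof (S_z1' V HV u); lra).
    assert (Dzz : Rabs (integ V u Fin.F1 - integ W u Fin.F1) <= A * r * d).
    { eapply Rle_trans; [apply (integ_diff_comp N A HA0 HA V W r); auto|].
      apply Rmult_le_compat_l; auto. apply Rmult_le_pos; auto. }
    assert (DZ : forall a, Rabs a <= d -> N (vsub (integ V a) (integ W a)) <= kap * r * d).
    { intros a Ha. eapply Rle_trans; [apply (integ_diff N A B HA0 HA HB V W r); auto|].
      unfold kap. replace (B * A * r * d) with (B * (A * r) * d) by ring.
      apply Rmult_le_compat_l; auto. apply Rmult_le_pos; auto. apply Rmult_le_pos; auto. }
    assert (NY2 : Neps N eps P u (integ V u) (integ V (integ V u Fin.F1)) (W u) (W (integ W u Fin.F1)))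
      by (apply NC; auto; apply S_Z; auto).
    assert (NY3 : Neps N eps P u (integ W u) (integ W (integ W u Fin.F1)) (W u) (W (integ W u Fin.F1)))
      by (apply NC; auto; apply S_Z; auto).
    assert (NY4 : Neps N eps P u (integ V u) (integ V (integ V u Fin.F1)) (V u) (V (integ V u Fin.F1)))
      by (apply NC; auto; apply S_Z; auto).
    set (Y2 := H u (integ V u) (integ V (integ V u Fin.F1)) (W u) (W (integ W u Fin.F1))).
    assert (E1 : N (vsub (F W u) Y2) <= L0 * (kap * r * d) + L1 * (kap * r * d + kap * M * (A * r * d))).
    { rewrite Nsym by auto. eapply Rle_trans; [apply Hii; auto|].
      apply Rplus_le_compat; apply Rmult_le_compat_l; try lra.
      - apply DZ; auto.
      - eapply Rle_trans; [apply (Ntri3 N HN _ (integ W (integ V u Fin.F1)))|].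
        apply Rplus_le_compat; [apply DZ; auto|].
        eapply Rle_trans; [apply S_Zlip; auto|].
        apply Rmult_le_compat_l; auto. apply Rmult_le_pos; auto. }
    assert (E2 : N (vsub Y2 (F V u)) <= C0 * r + C1 * (r + K * (A * r * d))).
    { rewrite Nsym by auto. eapply Rle_trans; [apply Hiii; auto|].
      apply Rplus_le_compat; apply Rmult_le_compat_l; auto.
      eapply Rle_trans; [apply (Ntri3 N HN _ (W (integ V u Fin.F1)))|].
      apply Rplus_le_compat; [apply Hr'|].
      eapply Rle_trans; [apply HWl|]. apply Rmult_le_compat_l; lra. }
    pose proof (Ntri3 N HN (F W u) Y2 (F V u)).
    replace (q * r) with (L0 * (kap * r * d) + L1 * (kap * r * d + kap * M * (A * r * d)) + (C0 * r + C1 * (r + K * (A * r * d))))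
      by (unfold q, Q, C; ring).
    lra. }
  pose (Ws := fun k => nat_rect (fun _ => R -> vec n) (fun _ => P) (fun _ W => T W) k).
  assert (WsS : forall k, SW (Ws k)).
  { induction k as [|k IH].
    - simpl. split; [|split; [|split]]; auto.
      + intros t s. rewrite Nsub0 by auto. pose proof (Rabs_pos (t - s)). nra.
      + intros t. rewrite Nsub0 by auto. nra.
    - apply TS; auto. }
  set (D := K * d).
  assert (HD : 0 <= D) by (unfold D; nra).
  assert (Wstep : forall k t, N (vsub (Ws (S k) t) (Ws k t)) <= D * q ^ k).
  { induction k as [|k IH]; intro t.
    - simpl pow. rewrite Rmult_1_r. destruct (WsS 1%nat) as (_ & _ & _ & H1). apply H1.
    - change (Ws (S (S k))) with (T (Ws (S k))). change (Ws (S k)) with (T (Ws k)) at 2.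
      eapply Rle_trans; [apply TC; auto; apply IH|]. simpl pow. lra. }
  assert (Wcau : forall k j t, N (vsub (Ws k t) (Ws (k + j)%nat t)) <= D * q ^ k * (1 - q ^ j) / (1 - q)).
  { intros k j t. induction j as [|j IH].
    - rewrite Nat.add_0_r, Nsub0 by auto. simpl pow. replace (D * q ^ k * (1 - 1) / (1 - q)) with 0 by (field; lra). lra.
    - eapply Rle_trans; [apply (Ntri3 N HN _ (Ws (k + j)%nat t))|].
      rewrite (Nsym N HN (Ws (k + j)%nat t)). rewrite Nat.add_succ_r.
      pose proof (Wstep (k + j)%nat t). rewrite pow_add in H0.
      replace (D * q ^ k * (1 - q ^ S j) / (1 - q)) with (D * q ^ k * (1 - q ^ j) / (1 - q) + D * (q ^ k * q ^ j))
        by (simpl pow; field; lra). lra. }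
  set (E0 := A * (D / (1 - q))).
  assert (HE0 : 0 <= E0) by (unfold E0; apply Rmult_le_pos; auto; apply Rdiv_le_0_compat; lra).
  assert (Wcomp : forall t i k l, (k <= l)%nat -> Rabs (Ws k t i - Ws l t i) <= E0 * q ^ k).
  { intros t i k l Hkl. replace l with (k + (l - k))%nat by lia.
    specialize (HA (vsub (Ws k t) (Ws (k + (l - k))%nat t)) i). unfold vsub at 1 in HA.
    eapply Rle_trans; [apply HA|]. unfold E0.
    replace (A * (D / (1 - q)) * q ^ k) with (A * (D * q ^ k / (1 - q))) by (field; lra).
    apply Rmult_le_compat_l; auto. eapply Rle_trans; [apply Wcau|].
    pose proof (pow_le q k ltac:(lra)). pose proof (pow_le q (l - k) ltac:(lra)).
    unfold Rdiv. apply Rmult_le_compat_r; [apply Rlt_le, Rinv_0_lt_compat; lra|].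
    pose proof (Rmult_le_pos _ _ HD H0). nra. }
  pose (Wl := fun t i => proj1_sig (cauchy_lim (fun k => Ws k t i) (fun k => E0 * q ^ k) (Wcomp t i) (to0_geo _ _ Hq))).
  assert (Hlim : forall t i k, Rabs (Ws k t i - Wl t i) <= E0 * q ^ k).
  { intros t i k. unfold Wl. destruct (cauchy_lim _ _ _ _) as [z Hz]; simpl; auto. }
  set (E := B * E0).
  assert (HE : 0 <= E) by (unfold E; apply Rmult_le_pos; auto).
  assert (Hlimn : forall t k, N (vsub (Ws k t) (Wl t)) <= E * q ^ k).
  { intros t k. unfold E. rewrite Rmult_assoc. apply HB. intro j. apply Hlim. }
  assert (Hlimn' : forall t k, N (vsub (Wl t) (Ws k t)) <= E * q ^ k).
  { intros t k. rewrite Nsym by auto. auto. }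
  assert (Hgeo : forall c, to0 (fun k => c * q ^ k)) by (intro c; apply to0_geo; auto).
  assert (WlS : SW Wl).
  { split; [|split; [|split]].
    - intros t s.
      assert (N (vsub (Wl t) (Wl s)) - K * Rabs (t - s) <= 0); [|lra].
      apply (le_of_to0 _ _ (Hgeo (2 * E))). intro k.
      pose proof (Ntri3 N HN (Wl t) (Ws k t) (Wl s)).
      pose proof (Ntri3 N HN (Ws k t) (Ws k s) (Wl s)).
      destruct (WsS k) as (Hl & _). pose proof (Hl t s).
      pose proof (Hlimn' t k). pose proof (Hlimn s k). lra.
    - apply (Nsub_eq N HN). apply (le_of_to0 _ _ (Hgeo E)). intro k.
      destruct (WsS k) as (_ & H0' & _). rewrite <- H0'. apply Hlimn'.
    - intro t. assert (Rabs (Wl t Fin.F1) - 1 <= 0); [|lra].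
      apply (le_of_to0 _ _ (Hgeo E0)). intro k.
      destruct (WsS k) as (_ & _ & H1' & _). pose proof (H1' t) as J1.
      pose proof (Hlim t Fin.F1 k) as J2.
      pose proof (Rabs_triang (Ws k t Fin.F1) (Wl t Fin.F1 - Ws k t Fin.F1)) as J3.
      replace (Ws k t Fin.F1 + (Wl t Fin.F1 - Ws k t Fin.F1)) with (Wl t Fin.F1) in J3 by ring.
      rewrite Rabs_minus_sym in J2. lra.
    - intro t. assert (N (vsub (Wl t) P) - K * d <= 0); [|lra].
      apply (le_of_to0 _ _ (Hgeo E)). intro k.
      destruct (WsS k) as (_ & _ & _ & H1'). pose proof (H1' t).
      pose proof (Ntri3 N HN (Wl t) (Ws k t) P). pose proof (Hlimn' t k). lra. }
  assert (Fix : forall t, T Wl t = Wl t).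
  { intro t. apply (Nsub_eq N HN). apply (le_of_to0 _ _ (Hgeo (2 * E))). intro k.
    pose proof (Ntri3 N HN (T Wl t) (T (Ws k) t) (Wl t)) as J1.
    pose proof (TC Wl (Ws k) (E * q ^ k) WlS (WsS k) (fun s => Hlimn' s k) t) as J2.
    pose proof (Hlimn t (S k)) as J3. change (Ws (S k)) with (T (Ws k)) in J3.
    simpl pow in J3. pose proof (pow_le q k ltac:(lra)) as J4.
    assert (q * (E * q ^ k) <= E * q ^ k) by (pose proof (Rmult_le_pos _ _ HE J4); nra).
    assert (E * (q * q ^ k) <= E * q ^ k) by (pose proof (Rmult_le_pos _ _ HE J4); nra).
    lra. }
  pose proof WlS as (WlL & Wl0 & Wl1 & WlP).
  assert (WlC : ccont Wl) by (apply S_cc; auto).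
  exists d, (integ Wl), Wl. split; [auto|split; [|split; [|split; [|split]]]].
  - intros i t Ht eps' Heps'. pose proof (RInt_der (fun s => Wl s i) t (WlC i)) as Hder.
    destruct (Hder eps' Heps') as [del Hdel]. exists del. split; [apply cond_pos|].
    intros s Hs [Hs1 Hs2]. assert (Hst : s - t <> 0) by (intro E'; rewrite E', Rabs_R0 in Hs1; lra).
    specialize (Hdel (s - t) Hst Hs2). replace (t + (s - t)) with s in Hdel by ring.
    unfold integ. exact Hdel.
  - intros i t Ht eps' Heps'.
    assert (HAK : 0 <= A * K) by (apply Rmult_le_pos; lra).
    exists (eps' / (A * K + 1)). split; [apply Rdiv_lt_0_compat; lra|].
    intros s Hs Hst. pose proof (comp_lip N A HA Wl K HA0 ltac:(lra) WlL i s t).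
    assert (A * K * Rabs (s - t) <= A * K * (eps' / (A * K + 1))) by (apply Rmult_le_compat_l; lra).
    assert (A * K * (eps' / (A * K + 1)) < eps').
    { apply Rmult_lt_reg_r with (A * K + 1); [lra|]. field_simplify; lra. }
    lra.
  - intros t Ht. split; [|split].
    + apply S_z1'; auto.
    + apply PTW; auto.
    + rewrite <- (Fix t) at 1. unfold T. rewrite clamp_id by auto. reflexivity.
  - apply integ0.
  - auto.
Qed.
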